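(* Fix $p\in[\tfrac23,1)$. Let $\Phi=\Phi_{\mathsf{Even}}=\sum_{v\in\mathsf{Even}}2^{-N_p(v)}$ and $\mathsf{Window}=\{m\in\mathbb Z_{\ge0}: |m-\mu_p|\le\mu_p^{0.6}\}$. Then, as $d\to\infty$, \[ \frac{\sum_{m\notin\mathsf{Window}}\frac{\Phi^m}{m!}}{\sigma_p\exp(\mu_p)}\xrightarrow{\mathbb P}0 \qquad\text{and}\qquad \frac{\sum_{m\notin\mathsf{Window}}\sum_{S\in\mathsf{Good}^{\mathsf{Even}}_m}2^{-N_p(S)}}{\sigma_p\exp(\mu_p)}\xrightarrow{\mathbb P}0 . \] The same holds with $\mathsf{Even}$ replaced by $\mathsf{Odd}$.
   Context: Setup and notation: - $Q_d=\{0,1\}^d$ is the hypercube graph. - $\mathsf{Even}$ and $\mathsf{Odd}$ are the vertices of even and odd Hamming weight. - $Q_{d,p}$ is obtained by retaining each edge independently with probability $p$. - $N_p(v)$ is the number of neighbors of $v$ in $Q_{d,p}$; for $S$ within one side, $N_p(S)$ is the number of vertices adjacent in $Q_{d,p}$ to some vertex of $S$. - Two same-side vertices are $2$-neighbors if they have a common neighbor in $Q_d$. - $\mathsf{Good}^{\mathsf{Even}}_m$ is the collection of $S\subseteq\mathsf{Even}$ with $|S|=m\le 2^d/d^2$ and no two elements being $2$-neighbors. - $\mu_p=\tfrac12(2-p)^d$ and $\sigma_p^2=\tfrac12(\tfrac{4-3p}{2})^d$. *)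

(* Defs.v *)
From HB Require Import structures.
From mathcomp Require Import all_boot all_order all_algebra.
From mathcomp Require Import all_classical all_reals all_analysis.
Set Implicit Arguments. Unset Strict Implicit. Unset Printing Implicit Defensive.
Import Order.TTheory GRing.Theory Num.Theory.
Import numFieldNormedType.Exports.
Local Open Scope ring_scope.

Definition vert (d : nat) := {ffun 'I_d -> bool}.

Definition flip d (u : vert d) (i : 'I_d) : vert d :=
  [ffun j => if j == i then ~~ u j else u j].

Definition hdist d (u v : vert d) : nat := #|[set i | u i != v i]|.

(* An edge of Q_d is encoded as (x, i) with x i = false: the edge {x, flip x i}. *)
Definition edge (d : nat) := (vert d * 'I_d)%type.
Definition cube_edges d : {set edge d} := [set e : edge d | ~~ e.1 e.2].

Definition ekey d (u : vert d) (i : 'I_d) : edge d :=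
  (if u i then flip u i else u, i).

Definition adj d (w : {set edge d}) (u v : vert d) : bool :=
  [exists i, (v == flip u i) && (ekey u i \in w)].

Definition Np d (w : {set edge d}) (v : vert d) : nat := #|[set x | adj w v x]|.
Definition NpS d (w : {set edge d}) (S : {set vert d}) : nat :=
  #|[set x | [exists v in S, adj w v x]]|.

(* side b: b = false is Even, b = true is Odd (parity of Hamming weight) *)
Definition side d (b : bool) : {set vert d} :=
  [set v : vert d | odd #|[set i | v i]| == b].

Definition two_nbr d (u v : vert d) : bool :=
  [exists x : vert d, (hdist u x == 1)%N && (hdist v x == 1)%N].

Definition Good (R : realType) d (b : bool) (m : nat) (S : {set vert d}) : bool :=
  [&& S \subset side d b, #|S| == m,
      (m%:R <= (2 ^+ d : R) / (d%:R ^+ 2)) &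
      [forall u in S, forall v in S, (u != v) ==> ~~ two_nbr u v]].

(* Law of Q_{d,p}: each edge retained independently with probability p.
   A configuration is the set w of retained edges, w \subset cube_edges d. *)
Definition eweight (R : realType) d (p : R) (w : {set edge d}) : R :=
  p ^+ #|w| * (1 - p) ^+ (#|cube_edges d| - #|w|).

Definition Prob (R : realType) d (p : R) (A : {set edge d} -> bool) : R :=
  \sum_(w : {set edge d} | (w \subset cube_edges d) && A w) eweight p w.

Definition mu (R : realType) (p : R) (d : nat) : R := (2 - p) ^+ d / 2.
Definition sigma (R : realType) (p : R) (d : nat) : R :=
  Num.sqrt (2^-1 * ((4 - 3 * p) / 2) ^+ d).

Definition inWindow (R : realType) (p : R) (d m : nat) : bool :=
  `|m%:R - mu p d| <= powR (mu p d) (3 / 5).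

Definition Phi {R : realType} d (b : bool) (w : {set edge d}) : R :=
  \sum_(v in side d b) ((2 : R) ^+ Np w v)^-1.

Definition tailPhi (R : realType) (p : R) d (b : bool) (w : {set edge d}) : R :=
  limn (fun N => \sum_(0 <= m < N | ~~ inWindow p d m) Phi b w ^+ m / (m`!)%:R).

(* sum_{m notin Window} sum_{S in Good_m} 2^{-N_p(S)}; Good_m is empty for
   m > 2^d (since |S| = m <= 2^d), so the sum over m is truncated there. *)
Definition tailGood (R : realType) (p : R) d (b : bool) (w : {set edge d}) : R :=
  \sum_(0 <= m < (2 ^ d).+1 | ~~ inWindow p d m)
     \sum_(S : {set vert d} | Good R b m S) ((2 : R) ^+ NpS w S)^-1.

Local Open Scope classical_set_scope.
Local Open Scope ring_scope.
Definition cvg_prob0 (R : realType) (p : R) (X : forall d : nat, {set edge d} -> R) : Prop :=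
  forall eps : R, 0 < eps ->
    (fun d : nat => Prob p (fun w : {set edge d} => eps < `|X d w|)) @ \oo --> (0 : R).

(* Main.v *)
Require Import Defs.
From HB Require Import structures.
From mathcomp Require Import all_boot all_order all_algebra.
From mathcomp Require Import all_classical all_reals all_analysis.
From mathcomp Require Import ring lra.
Import Order.TTheory GRing.Theory Num.Theory.
Import numFieldNormedType.Exports.
Local Open Scope ring_scope.
Set Implicit Arguments. Unset Strict Implicit. Unset Printing Implicit Defensive.

Section Graph.
Variable d : nat.
Implicit Types (u v x : vert d) (i j : 'I_d).

Lemma flipE u i j : flip u i j = if j == i then ~~ u j else u j.
Proof. by rewrite /flip ffunE. Qed.

Lemma flipK u i : flip (flip u i) i = u.
Proof. by apply/ffunP => j; rewrite !flipE; case: eqP => // ->; rewrite negbK. Qed.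

Lemma flip_inj u i j : flip u i = flip u j -> i = j.
Proof.
move/ffunP => /(_ i); rewrite !flipE eqxx; case: eqP => // _.
by case: (u i).
Qed.

Lemma flip_injv i : injective (fun u : vert d => flip u i).
Proof. by move=> u v /= /(congr1 (fun x => flip x i)); rewrite /= !flipK. Qed.

Lemma odd_flip u i : odd #|[set j | flip u i j]| = ~~ odd #|[set j | u j]|.
Proof.
case ui: (u i).
- have -> : [set j | flip u i j] = [set j | u j] :\ i.
    by apply/setP => j; rewrite !inE flipE; case: eqP => [->|]; rewrite ?ui.
  by rewrite [in RHS](cardsD1 i) inE ui /= negbK.
- have -> : [set j | flip u i j] = i |: [set j | u j].
    apply/setP => j; rewrite !inE flipE; case: eqP => [->|]; rewrite ?ui //.
  by rewrite cardsU1 inE ui.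
Qed.

Lemma side_flip u i b : (flip u i \in side d b) = (u \in side d (~~ b)).
Proof. by rewrite !inE odd_flip; case: b; case: odd. Qed.

Lemma ekey_C u i : ekey u i \in cube_edges d.
Proof.
rewrite inE /ekey /=; case ui: (u i); by rewrite ?flipE ?eqxx ui.
Qed.

Lemma ekey_inj u : injective (ekey u).
Proof. by move=> i j [_]. Qed.

Definition K u : {set edge d} := [set ekey u i | i in 'I_d].

Lemma card_K u : #|K u| = d.
Proof. by rewrite card_imset ?card_ord //; exact: ekey_inj. Qed.

Lemma K_C u : K u \subset cube_edges d.
Proof. by apply/fintype.subsetP => e /imsetP [i _ ->]; exact: ekey_C. Qed.

Lemma K_disj b u v : u \in side d b -> v \in side d b -> u != v ->
  [disjoint K u & K v].
Proof.
move=> us vs uv; apply/pred0P => e /=; apply/negP => /andP [].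
move=> /imsetP [i _ ->] /imsetP [j _ [E ij]].
move: E; rewrite -ij; case ui: (u i); case vi: (v i).
- by move/flip_injv => E; rewrite E eqxx in uv.
- move=> E; move: vs; rewrite -E side_flip => vs.
  by move: us vs; rewrite !inE => /eqP -> /eqP; case: odd; case: b.
- move=> E; move: us; rewrite E side_flip => us.
  by move: us vs; rewrite !inE => /eqP -> /eqP; case: odd; case: b.
- by move=> E; rewrite E eqxx in uv.
Qed.

Lemma Np_K (w : {set edge d}) v : Np w v = #|K v :&: w|.
Proof.
rewrite /Np.
have -> : [set x | adj w v x] = [set flip v i | i in [set i | ekey v i \in w]].
  apply/setP => x; rewrite !inE; apply/existsP/imsetP.
  - by move=> [i /andP [/eqP -> H]]; exists i; rewrite ?inE.
  - by move=> [i]; rewrite inE => H ->; exists i; rewrite eqxx.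
rewrite card_imset; last by move=> i j; exact: flip_inj.
have -> : K v :&: w = [set ekey v i | i in [set i | ekey v i \in w]].
  apply/setP => e; rewrite !inE; apply/andP/imsetP.
  - by move=> [/imsetP [i _ ->] H]; exists i; rewrite ?inE.
  - by move=> [i]; rewrite inE => H ->; split => //; apply/imsetP; exists i.
by rewrite card_imset //; exact: ekey_inj.
Qed.

Lemma hdist_flip u i : hdist u (flip u i) = 1%N.
Proof.
rewrite /hdist (_ : [set j | u j != flip u i j] = [set i]) ?cards1 //.
apply/setP => j; rewrite !inE flipE; case: (j =P i) => [->|ne].
  by rewrite ?eqxx; case: (u i).
by rewrite eqxx.
Qed.

Lemma adj_hdist (w : {set edge d}) v x : adj w v x -> hdist v x = 1%N.
Proof. by move=> /existsP [i /andP [/eqP -> _]]; exact: hdist_flip. Qed.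

Lemma NpS_sum (w : {set edge d}) (S : {set vert d}) :
  [forall u in S, forall v in S, (u != v) ==> ~~ two_nbr u v] ->
  NpS w S = (\sum_(v in S) Np w v)%N.
Proof.
move=> H.
have uniq1 x u v : u \in S -> v \in S -> adj w u x -> adj w v x -> u = v.
  move=> uS vS ux vx; apply/eqP; apply/negPn/negP => uv.
  move/forallP: H => /(_ u); rewrite uS /= => /forallP /(_ v).
  rewrite vS uv /= => /negP; apply; apply/existsP; exists x.
  by rewrite (adj_hdist ux) (adj_hdist vx).
rewrite /NpS /Np.
under eq_bigr => v _ do rewrite -sum1_card big_mkcond /=.
rewrite exchange_big /= -sum1_card [in LHS]big_mkcond /=.
apply: eq_bigr => x _; rewrite inE.
case: existsP => [[v /andP [vS vx]]|nH].
- rewrite (bigD1 v) //= inE vx big1 ?addn0 // => u /andP [uS uv].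
  rewrite inE; case: ifP => // ux.
  by rewrite (uniq1 x u v uS vS ux vx) eqxx in uv.
- rewrite big1 // => v vS; rewrite inE; case: ifP => // vx.
  by case: nH; exists v; rewrite vS.
Qed.

Lemma card_vert : #|{: vert d}| = (2 ^ d)%N.
Proof. by rewrite card_ffun card_bool card_ord. Qed.

Lemma card_side b : (0 < d)%N -> (#|side d b| * 2 = 2 ^ d)%N.
Proof.
move=> d0; pose i0 : 'I_d := Ordinal d0.
have E : #|side d b| = #|side d (~~ b)|.
  rewrite -(card_imset (side d (~~ b)) (@flip_injv i0)).
  apply: eq_card => u; apply/idP/imsetP.
  - by move=> us; exists (flip u i0); rewrite ?flipK // side_flip negbK.
  - by move=> [v vs ->]; rewrite side_flip.
have P : (#|side d b| + #|side d (~~ b)| = 2 ^ d)%N.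
  rewrite -card_vert -cardsUI.
  have -> : #|side d b :&: side d (~~ b)| = 0%N.
    by apply: eq_card0 => u; rewrite !inE; case: odd; case: (b).
  rewrite addn0; apply: eq_card => u; rewrite !inE.
  by case: odd; case: (b).
by rewrite -P E muln2 addnn.
Qed.

End Graph.

Section ProbSec.
Variable R : realType.
Variable d : nat.
Variable p : R.
Hypothesis hp0 : 0 <= p.
Hypothesis hp1 : p <= 1.

Notation CE := (cube_edges d).
Notation EW := (@eweight R d p).

Definition Ex (f : {set edge d} -> R) : R :=
  \sum_(w : {set edge d} | w \subset CE) EW w * f w.

Definition pe (e : edge d) : R := if e \in CE then p else 0.
Definition qe (e : edge d) : R := if e \in CE then 1 - p else 1.

Lemma eweight_ge0 (w : {set edge d}) : 0 <= EW w.
Proof. by rewrite /eweight mulr_ge0 // exprn_ge0 // subr_ge0. Qed.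

Lemma eweight_prod (w : {set edge d}) : w \subset CE ->
  EW w = \prod_e (if e \in w then pe e else qe e).
Proof.
move=> wC; rewrite (bigID (mem w)) /=.
rewrite (eq_bigr (fun _ => p)); last first.
  by move=> e ew; rewrite ew /pe (fintype.subsetP wC).
rewrite [X in _ * X](eq_bigr (fun e => if e \in CE then 1 - p else 1)); last first.
  by move=> e /negPf ->.
rewrite -big_mkcondr /= !prodr_const /eweight; congr (_ * _ ^+ _).
have -> : (#|CE| - #|w| = #|CE :\: w|)%N.
  by rewrite cardsD (finset.setIidPr wC).
by apply: eq_card => e; rewrite [RHS]unfold_in /= !inE andbC.
Qed.

Lemma prod_not_sub (w : {set edge d}) : ~~ (w \subset CE) ->
  \prod_e (if e \in w then pe e else qe e) = 0.
Proof.
move=> /fintype.subsetPn [e ew eC].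
by rewrite (bigD1 e) //= ew /pe (negbTE eC) mul0r.
Qed.

Lemma Ex_prod (al be : edge d -> R) :
  Ex (fun w => \prod_e (if e \in w then al e else be e)) =
  \prod_e (pe e * al e + qe e * be e).
Proof.
rewrite bigA_distr /Ex big_mkcond /=; apply: eq_bigr => w _.
case: ifP => wC.
- rewrite eweight_prod // -big_split /=; apply: eq_bigr => e _.
  by case: ifP.
- rewrite (eq_bigr (fun e => (if e \in w then pe e else qe e) *
                             (if e \in w then al e else be e))).
    by rewrite big_split /= prod_not_sub ?wC // mul0r.
  by move=> e _; case: ifP.
Qed.

Lemma Ex_ext f g : (forall w, f w = g w) -> Ex f = Ex g.
Proof. by move=> fg; apply: eq_bigr => w _; rewrite fg. Qed.

Lemma Ex_add f g : Ex (fun w => f w + g w) = Ex f + Ex g.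
Proof. by rewrite /Ex -big_split; apply: eq_bigr => w _; rewrite mulrDr. Qed.

Lemma Ex_scale c f : Ex (fun w => c * f w) = c * Ex f.
Proof.
by rewrite /Ex big_distrr; apply: eq_bigr => w _; rewrite mulrCA.
Qed.

Lemma Ex_sum (I : finType) (P : pred I) (F : I -> {set edge d} -> R) :
  Ex (fun w => \sum_(i | P i) F i w) = \sum_(i | P i) Ex (F i).
Proof.
rewrite /Ex (eq_bigr (fun w => \sum_(i | P i) EW w * F i w)).
  by rewrite exchange_big.
by move=> w _; rewrite big_distrr.
Qed.

Lemma Ex_le f g : (forall w, f w <= g w) -> Ex f <= Ex g.
Proof.
by move=> fg; apply: ler_sum => w _; rewrite ler_wpM2l // eweight_ge0.
Qed.

Lemma Ex1 : Ex (fun _ => 1) = 1.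
Proof.
rewrite (Ex_ext (g := fun w => \prod_e (if e \in w then 1 else 1))).
  rewrite Ex_prod big1 // => e _; rewrite !mulr1 /pe /qe.
  by case: ifP => _; lra.
by move=> w; rewrite big1 // => e _; case: ifP.
Qed.

Lemma Ex_K (Ks : {set edge d}) (c : R) : Ks \subset CE ->
  Ex (fun w => c ^+ #|Ks :&: w|) = (p * c + (1 - p)) ^+ #|Ks|.
Proof.
move=> KC.
rewrite (Ex_ext (g := fun w => \prod_e
    (if e \in w then (if e \in Ks then c else 1) else 1))); last first.
  move=> w; rewrite -prodr_const big_mkcond /=; apply: eq_bigr => e _.
  by rewrite inE; case: (e \in Ks); case: (e \in w).
rewrite Ex_prod -prodr_const [RHS]big_mkcond /=; apply: eq_bigr => e _.
rewrite mulr1 /pe /qe; case eK: (e \in Ks).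
  by rewrite (fintype.subsetP KC).
by rewrite mulr1; case: ifP => _; lra.
Qed.

Lemma Prob_le (A : {set edge d} -> bool) f :
  (forall w, 0 <= f w) -> (forall w, A w -> 1 <= f w) ->
  Prob p A <= Ex f.
Proof.
move=> f0 Af; rewrite /Prob /Ex big_mkcondr /=; apply: ler_sum => w _.
case: ifP => Aw.
  by rewrite -[X in X <= _]mulr1 ler_wpM2l ?eweight_ge0 ?Af.
by rewrite mulr_ge0 ?eweight_ge0.
Qed.

End ProbSec.

Section Moments.
Variable R : realType.
Variable d : nat.
Variable p : R.
Hypothesis hp0 : 0 <= p.
Hypothesis hp1 : p <= 1.
Variable b : bool.

Definition xv (w : {set edge d}) (v : vert d) : R := ((2 : R) ^+ Np w v)^-1.

Lemma xvE w v : xv w v = (2^-1) ^+ #|K v :&: w|.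
Proof. by rewrite /xv Np_K exprVn. Qed.

Lemma xv_ge0 w v : 0 <= xv w v.
Proof. by rewrite /xv invr_ge0 exprn_ge0. Qed.

Lemma xv_le1 w v : xv w v <= 1.
Proof. rewrite /xv invf_le1; [apply: exprn_ege1; lra | apply: exprn_gt0; lra]. Qed.

Notation q := ((1 - p / 2) ^+ d).
Notation q2 := ((1 - 3 * p / 4) ^+ d).

Lemma Ex_xv v : Ex p (fun w => xv w v) = q.
Proof.
rewrite (Ex_ext p (g := fun w => (2^-1) ^+ #|K v :&: w|)); last by move=> w; rewrite xvE.
by rewrite Ex_K ?K_C // card_K; congr (_ ^+ _); lra.
Qed.

Lemma Ex_xv2 v : Ex p (fun w => xv w v * xv w v) = q2.
Proof.
rewrite (Ex_ext p (g := fun w => (2^-1 * 2^-1) ^+ #|K v :&: w|)); last first.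
  by move=> w; rewrite xvE exprMn.
by rewrite Ex_K ?K_C // card_K; congr (_ ^+ _); lra.
Qed.

Lemma Ex_xuxv u v : u \in side d b -> v \in side d b -> u != v ->
  Ex p (fun w => xv w u * xv w v) = q * q.
Proof.
move=> us vs uv.
have D := K_disj us vs uv.
rewrite (Ex_ext p (g := fun w => (2^-1) ^+ #|(K u :|: K v) :&: w|)); last first.
  move=> w; rewrite !xvE -exprD finset.setIUl; congr (_ ^+ _).
  apply/esym/eqP; rewrite (leq_card_setU _ _).2.
  by rewrite (disjointWl (subsetIl _ _)) // disjoint_sym (disjointWl (subsetIl _ _)) // disjoint_sym.
rewrite Ex_K; last by rewrite finset.subUset !K_C.
have -> : #|K u :|: K v| = (#|K u| + #|K v|)%N.
  by apply/eqP; rewrite (leq_card_setU _ _).2.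
rewrite !card_K.
by rewrite exprD; congr (_ ^+ _ * _ ^+ _); lra.
Qed.

Notation A := (side d b).
Notation n := (#|A|%:R : R).

Notation Ph := (@Phi R d b).

Lemma PhiE (w : {set edge d}) : Ph w = \sum_(v in A) xv w v.
Proof. by []. Qed.

Lemma Phi_ge0 (w : {set edge d}) : 0 <= Ph w.
Proof. by rewrite PhiE sumr_ge0 // => v _; exact: xv_ge0. Qed.

Lemma Ex_Phi : Ex p Ph = n * q.
Proof.
rewrite (Ex_ext p (g := fun w => \sum_(v in A) xv w v)) // Ex_sum.
by rewrite (eq_bigr (fun _ => q)) ?sumr_const ?mulr_natl // => v _; exact: Ex_xv.
Qed.

Lemma q_ge0 : 0 <= q.
Proof. rewrite exprn_ge0 //. move: hp0 hp1 => h0 h1. lra. Qed.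

Lemma Ex_Phi2 : Ex p (fun w => Ph w * Ph w) <= n * (q2 + n * (q * q)).
Proof.
rewrite (Ex_ext p (g := fun w => \sum_(u in A) \sum_(v in A) xv w u * xv w v)); last first.
  by move=> w; rewrite PhiE mulr_suml; apply: eq_bigr => u _; rewrite mulr_sumr.
rewrite Ex_sum [X in _ <= X]mulr_natl -sumr_const; apply: ler_sum => u uA.
rewrite Ex_sum (bigD1 u) //= Ex_xv2.
have -> : n * (q * q) = \sum_(v in A) q * q by rewrite sumr_const mulr_natl.
rewrite [X in _ <= _ + X](bigD1 u) //= addrA lerD //.
  by rewrite lerDl mulr_ge0 // q_ge0.
apply: ler_sum => v /andP [vA vu]; rewrite Ex_xuxv //.
by rewrite eq_sym.
Qed.

Lemma Ex_var : Ex p (fun w => (Ph w - n * q) ^+ 2) <= n * q2.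
Proof.
rewrite (Ex_ext p (g := fun w => Ph w * Ph w + ((- 2 * (n * q)) * Ph w
   + (n * q) ^+ 2 * 1))); last by move=> w; rewrite mulr1; ring.
rewrite !Ex_add !Ex_scale Ex1 Ex_Phi.
have := Ex_Phi2; set E2 := Ex p _ => H.
have -> : E2 + (-2 * (n * q) * (n * q) + (n * q) ^+ 2 * 1) = E2 - n * (n * (q * q)).
  by ring.
by rewrite lerBlDr; apply: (le_trans H); rewrite mulrDr.
Qed.

End Moments.

Section Tail.
Variable R : realType.

Lemma gen_fun (T : finType) (A : {set T}) (y : T -> R) :
  \sum_(S : {set T} | S \subset A) \prod_(v in S) y v = \prod_(v in A) (1 + y v).
Proof.
rewrite [RHS]big_mkcond /=.
rewrite [RHS](eq_bigr (fun v => (if v \in A then y v else 0) + 1)); last first.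
  by move=> v _; case: ifP => _; rewrite ?add0r // addrC.
rewrite bigA_distr big_mkcond /=; apply: eq_big => // S _.
case: ifP => SA.
- rewrite big_mkcond /=; apply: eq_bigr => v _.
  by case: ifP => // vS; rewrite (fintype.subsetP SA).
- move/negbT: SA => /fintype.subsetPn [v vS vA].
  by rewrite (bigD1 v) //= vS (negbTE vA) mul0r.
Qed.

Lemma exp_partial (y : R) N : 0 <= y ->
  \sum_(0 <= m < N) y ^+ m / (m`!)%:R <= expR y.
Proof.
move=> y0.
have -> : \sum_(0 <= m < N) y ^+ m / (m`!)%:R = series (exp_coeff y) N by [].
apply: nondecreasing_cvgn_le; last exact: is_cvg_series_exp_coeff.
apply/nondecreasing_seqP => n; rewrite /series /= big_nat_recr //= lerDl.
by rewrite /exp_coeff /= divr_ge0 // exprn_ge0.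
Qed.

Variables (mu a t : R).

Definition cm (m : nat) : R :=
  expR (t * (m%:R - (mu + a))) + expR (t * ((mu - a) - m%:R)).

Lemma cm_ge0 m : 0 <= cm m.
Proof. by rewrite addr_ge0 // expR_ge0. Qed.

Lemma cm_ge1 m : 0 <= t -> ~~ (`|m%:R - mu| <= a) -> 1 <= cm m.
Proof.
move=> t0; rewrite -ltNge ltr_normr => /orP [] H; rewrite /cm.
- have E1 : 0 <= t * (m%:R - (mu + a)) by rewrite mulr_ge0 //; lra.
  have := expR_ge1Dx (t * (m%:R - (mu + a))).
  have := expR_ge0 (t * ((mu - a) - m%:R)); lra.
- have E1 : 0 <= t * ((mu - a) - m%:R) by rewrite mulr_ge0 //; lra.
  have := expR_ge1Dx (t * ((mu - a) - m%:R)).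
  have := expR_ge0 (t * (m%:R - (mu + a))); lra.
Qed.

Definition Bd (F : R) : R :=
  expR (- (t * (mu + a))) * expR (expR t * F) +
  expR (t * (mu - a)) * expR (expR (- t) * F).

Lemma cm_split m x : cm m * x =
  expR (- (t * (mu + a))) * (expR t ^+ m * x) +
  expR (t * (mu - a)) * (expR (- t) ^+ m * x).
Proof.
rewrite /cm mulrDl !mulrA -!expRM_natl -!expRD; congr (expR _ * _ + expR _ * _).
  by ring.
by ring.
Qed.

Lemma tail_partial (F : R) N : 0 <= F -> 0 <= t ->
  \sum_(0 <= m < N | ~~ (`|m%:R - mu| <= a)) F ^+ m / (m`!)%:R <= Bd F.
Proof.
move=> F0 t0.
apply: (@le_trans _ _ (\sum_(0 <= m < N) cm m * (F ^+ m / (m`!)%:R))).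
  rewrite big_mkcond /=; apply: ler_sum => m _.
  have T0 : 0 <= F ^+ m / (m`!)%:R by rewrite divr_ge0 // exprn_ge0.
  case: ifP => H; last by rewrite mulr_ge0 // cm_ge0.
  by rewrite -[X in X <= _]mul1r ler_wpM2r // cm_ge1.
under eq_bigr => m _ do rewrite cm_split !(mulrA (expR _ ^+ m)) -!exprMn.
rewrite big_split /= -!big_distrr /= /Bd.
rewrite lerD // ler_wpM2l ?expR_ge0 // exp_partial // mulr_ge0 // expR_ge0.
Qed.

End Tail.

Section Apply.
Variable R : realType.
Variable p : R.
Variable d : nat.
Variable b : bool.
Variable w : {set edge d}.
Variable t : R.
Hypothesis t0 : 0 <= t.

Notation M := (mu p d).
Notation a := (powR (mu p d) (3 / 5)).
Notation A := (side d b).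
Notation Ph := (@Phi R d b w).
Notation x := (@xv R d w).

Lemma prod_le_exp (c : R) : 0 <= c ->
  \prod_(v in A) (1 + c * x v) <= expR (c * Ph).
Proof.
move=> c0; rewrite PhiE big_distrr expR_sum /=; apply: ler_prod => v _.
by rewrite expR_ge1Dx addr_ge0 // mulr_ge0 // xv_ge0.
Qed.

Lemma tailGood_le : tailGood p b w <= Bd M a t Ph.
Proof.
pose H m := \sum_(S : {set vert d} | (S \subset A) && (#|S| == m)) \prod_(v in S) x v.
have H0 m : 0 <= H m by rewrite sumr_ge0 // => S _; rewrite prodr_ge0 // => v _; exact: xv_ge0.
apply: (@le_trans _ _ (\sum_(0 <= m < (2 ^ d).+1 | ~~ inWindow p d m) H m)).
  apply: ler_sum => m _.
  rewrite /H big_mkcond [X in _ <= X]big_mkcond /=; apply: ler_sum => S _.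
  case: ifP => G.
    move: (G) => /and4P [SA /eqP cS _ no2].
    rewrite SA cS eqxx /= NpS_sum // expr_sum -prodfV.
    by [].
  by case: ifP => // _; rewrite prodr_ge0 // => v _; exact: xv_ge0.
apply: (@le_trans _ _ (\sum_(0 <= m < (2 ^ d).+1) cm M a t m * H m)).
  rewrite big_mkcond /=; apply: ler_sum => m _.
  case: ifP => W; last by rewrite mulr_ge0 // cm_ge0.
  by rewrite -[X in X <= _]mul1r ler_wpM2r // cm_ge1.
have -> : \sum_(0 <= m < (2 ^ d).+1) cm M a t m * H m =
    \sum_(S : {set vert d} | S \subset A) cm M a t #|S| * \prod_(v in S) x v.
  have E m : cm M a t m * H m = \sum_(S : {set vert d} | S \subset A)
      (if #|S| == m then cm M a t #|S| * \prod_(v in S) x v else 0).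
    rewrite /H big_distrr big_mkcondr /=; apply: eq_bigr => S _.
    by case: ifP => // /eqP ->.
  rewrite (eq_bigr _ (fun m _ => E m)) exchange_big /=; apply: eq_bigr => S _.
  have hlt : (#|S| < (2 ^ d).+1)%N by rewrite ltnS -card_vert max_card.
  rewrite -big_mkcond /= big_mkord (big_pred1 (Ordinal hlt)) // => m /=.
under eq_bigr => S _ do rewrite cm_split.
rewrite big_split /= -!big_distrr /=.
under eq_bigr => S _ do rewrite -prodr_const -big_split /=.
under [X in _ + _ * X]eq_bigr => S _ do rewrite -prodr_const -big_split /=.
rewrite !gen_fun /Bd lerD // ler_wpM2l ?expR_ge0 // prod_le_exp // expR_ge0.
Qed.

Definition sPhi (N : nat) : R :=
  \sum_(0 <= m < N | ~~ inWindow p d m) Ph ^+ m / (m`!)%:R.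

Lemma sPhi_le N : sPhi N <= Bd M a t Ph.
Proof.
by rewrite /sPhi /inWindow; apply: tail_partial => //; exact: Phi_ge0.
Qed.

Lemma sPhi_nd : nondecreasing_seq sPhi.
Proof.
apply/nondecreasing_seqP => n; rewrite /sPhi !(big_mkcond (fun m => ~~ inWindow p d m)).
rewrite big_nat_recr //= lerDl; case: ifP => // _.
by rewrite divr_ge0 // exprn_ge0 // Phi_ge0.
Qed.

Lemma sPhi_cvg : cvgn sPhi.
Proof.
apply: nondecreasing_is_cvgn; first exact: sPhi_nd.
by exists (Bd M a t Ph) => _ [n _ <-]; exact: sPhi_le.
Qed.

Lemma tailPhi_bounds : 0 <= tailPhi p b w <= Bd M a t Ph.
Proof.
apply/andP; split.
  have -> : (0 : R) = sPhi 0 by rewrite /sPhi big_geq.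
  exact: nondecreasing_cvgn_le sPhi_nd sPhi_cvg 0.
apply: limr_le; first exact: sPhi_cvg.
by apply: nearW => n; exact: sPhi_le.
Qed.

End Apply.

Section Analysis.
Variable R : realType.

Lemma expR_up (t : R) : 0 <= t -> t <= 2^-1 -> expR t <= 1 + t + 2 * t ^+ 2.
Proof.
move=> t0 t1.
have h := expR_ge1Dx (- t).
have e1 : expR t * expR (- t) = 1 by rewrite expRxMexpNx_1.
have e0 := expR_gt0 t.
have h2 : expR t * (1 - t) <= 1.
  by rewrite -[X in _ <= X]e1 ler_wpM2l ?(ltW e0).
have p0 : 0 < 1 - t by lra.
rewrite -(ler_pM2r p0); apply: (le_trans h2).
have -> : (1 + t + 2 * t ^+ 2) * (1 - t) = 1 + t ^+ 2 * (1 - 2 * t) by ring.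
rewrite lerDl; apply: mulr_ge0; [exact: sqr_ge0 | lra].
Qed.

Lemma expR_down (t : R) : 0 <= t -> expR (- t) <= 1 - t + t ^+ 2.
Proof.
move=> t0.
have h := expR_ge1Dx t.
have e1 : expR (- t) * expR t = 1 by rewrite mulrC expRxMexpNx_1.
have e0 := expR_gt0 (- t).
have h2 : expR (- t) * (1 + t) <= 1.
  by rewrite -[X in _ <= X]e1 ler_wpM2l ?(ltW e0) // addrC.
have p0 : 0 < 1 + t by lra.
rewrite -(ler_pM2r p0); apply: (le_trans h2).
have -> : (1 - t + t ^+ 2) * (1 + t) = 1 + t ^+ 3 by ring.
by rewrite lerDl exprn_ge0.
Qed.

Lemma Bd_bound (m r F : R) : 1 <= m -> 0 <= r -> 0 <= F -> F <= m + r ->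
  Bd m (powR m (3 / 5)) (powR m (3 / 5) / (4 * m)) F <=
  2 * expR (m - expR (ln m / 5) / 8 + 2 * r).
Proof.
move=> m1 r0 F0 Fm.
set a := powR m (3 / 5); set t := a / (4 * m).
have m0 : 0 < m by lra.
have a0 : 0 <= a by exact: powR_ge0.
have am : a <= m by apply: ler1_powR => //; lra.
have mn0 : m != 0 by rewrite gt_eqF.
have ta : a = 4 * t * m by rewrite /t; field.
have t0 : 0 <= t by rewrite /t divr_ge0 //; lra.
have t1 : t <= 4^-1.
  have : 4 * t * m <= m by rewrite -ta.
  move=> h; have h' : (4 * t - 1) * m <= 0 by move: h; rewrite mulrBl mul1r subr_le0.
  have : 4 * t - 1 <= 0.
    by move: h'; rewrite pmulr_lle0 //.
  lra.
have Q : 2 * t ^+ 2 * m = expR (ln m / 5) / 8.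
  have em : expR (ln m) = m by rewrite lnK // posrE.
  have a2 : a ^+ 2 = m * expR (ln m / 5).
    transitivity (expR (ln m) * expR (ln m / 5)); last by rewrite em.
    rewrite -expRD /a /powR gt_eqF // -expRM_natl; congr (expR _); lra.
  have -> : 2 * t ^+ 2 * m = a ^+ 2 / (8 * m) by rewrite ta; field.
  by rewrite a2; field.
rewrite -Q /Bd.
have ht2 : t ^+ 2 <= t.
  by rewrite expr2 -[X in _ <= X]mulr1 ler_wpM2l //; lra.
have ht2m : 0 <= t ^+ 2 * m by apply: mulr_ge0; [exact: sqr_ge0 | lra].
have htm : 0 <= t * m by apply: mulr_ge0; lra.
have t2p : 0 <= t ^+ 2 := sqr_ge0 t.
rewrite -!expRD [2 * expR _]mulr_natl mulr2n; apply: lerD; rewrite ler_expR.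
- have P0 : 0 <= 1 + t + 2 * t ^+ 2 by lra.
  have h1 : expR t * F <= (1 + t + 2 * t ^+ 2) * (m + r).
    by apply: ler_pM => //; (try exact: expR_ge0); apply: expR_up => //; lra.
  have h2 : (1 + t + 2 * t ^+ 2) * r <= 2 * r by apply: ler_wpM2r => //; lra.
  have h3 : (1 + t + 2 * t ^+ 2) * (m + r) =
    m + t * m + 2 * (t ^+ 2 * m) + (1 + t + 2 * t ^+ 2) * r by ring.
  have h4 : t * (m + a) = t * m + 4 * (t ^+ 2 * m) by rewrite ta; ring.
  rewrite h4; move: h1; rewrite h3 => h1; lra.
- have h1 : expR (- t) * F <= (1 - t + t ^+ 2) * (m + r).
    by apply: ler_pM => //; (try exact: expR_ge0); exact: expR_down.
  have h2 : (1 - t + t ^+ 2) * r <= 2 * r by apply: ler_wpM2r => //; lra.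
  have h3 : (1 - t + t ^+ 2) * (m + r) =
    m - t * m + (t ^+ 2 * m) + (1 - t + t ^+ 2) * r by ring.
  have h4 : t * (m - a) = t * m - 4 * (t ^+ 2 * m) by rewrite ta; ring.
  rewrite h4; move: h1; rewrite h3 => h1; lra.
Qed.

End Analysis.

Section Final.
Variable R : realType.
Variable p : R.
Hypothesis hp0 : 2 / 3 <= p.
Hypothesis hp1 : p < 1.

Lemma mu_gt0 d : 0 < mu p d.
Proof.
move: hp0 hp1 => h0 h1.
by rewrite /mu divr_gt0 // exprn_gt0 //; lra.
Qed.

Lemma ln_mu d : ln (mu p d) = d%:R * ln (2 - p) - ln 2.
Proof.
move: hp0 hp1 => h0 h1.
have p2 : 0 < 2 - p by lra.
rewrite /mu lnM ?posrE ?exprn_gt0 ?invr_gt0 // lnXn // lnV ?posrE //.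
by rewrite mulr_natl.
Qed.

Lemma sigma_ge d : expR (- (d%:R + 1)) <= sigma p d.
Proof.
move: hp0 hp1 => h0 h1.
have d0 : (0 : R) <= d%:R := ler0n _ _.
set s := expR (- (d%:R + 1)).
have s0 : 0 <= s by exact: expR_ge0.
have s1 : s <= 1 by rewrite /s expR_le1; lra.
have e1 : expR (-1) <= (2^-1 : R).
  rewrite expRN lef_pV2 ?posrE ?expR_gt0 //.
  by have := expR_ge1Dx (1 : R); lra.
have hs : s <= (2^-1) ^+ d.+1.
  have -> : s = expR (-1) ^+ d.+1.
    by rewrite /s -expRM_natl mulrN1 -natr1.
  by apply: lerXn2r; rewrite ?nnegrE ?expR_ge0 //; lra.
have -> : s = Num.sqrt (s ^+ 2) by rewrite sqrtr_sqr ger0_norm.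
rewrite /sigma ler_sqrt; last first.
  by rewrite mulr_ge0 // ?exprn_ge0 //; lra.
apply: (le_trans (_ : s ^+ 2 <= s)).
  by rewrite expr2 -[X in _ <= X]mulr1 ler_wpM2l.
apply: (le_trans hs); rewrite exprS ler_wpM2l //.
by apply: lerXn2r; rewrite ?nnegrE //; lra.
Qed.

Lemma sigma_gt0 d : 0 < sigma p d.
Proof. exact: lt_le_trans (expR_gt0 _) (sigma_ge d). Qed.

Lemma key_bound eps : 0 < eps -> exists N : nat, forall d, (N <= d)%N ->
  [/\ (1 < d)%N, 1 <= mu p d &
   2 * expR (- (expR (ln (mu p d) / 5) / 8) + 2 * d%:R) <= eps * expR (- (d%:R + 1))].
Proof.
move: hp0 hp1 => h0 h1 eps0.
set c := ln (2 - p).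
have c0 : 0 < c by apply: ln_gt0; lra.
have l2 : 0 <= ln (2 : R) by apply: ln_ge0; lra.
set K := 40 + 8 * `|ln eps|.
have K0 : 0 <= K by rewrite /K; have := normr_ge0 (ln eps); lra.
set D := 2 + 2 * ln 2 / c + 400 * K / c ^+ 2.
have D1 : 0 <= 2 * ln 2 / c by rewrite divr_ge0 //; lra.
have D2 : 0 <= 400 * K / c ^+ 2 by rewrite divr_ge0 ?exprn_ge0 //; lra.
have D0 : 0 <= D by rewrite /D; lra.
exists (Num.Def.archi_bound D) => d dN.
have dD : D <= d%:R.
  have := archi_boundP D0; rewrite -(ler_nat R) in dN; lra.
have d1 : (1 : R) < d%:R by rewrite /D in dD; lra.
have dc : 2 * ln 2 <= d%:R * c.
  have : 2 * ln 2 / c <= d%:R by rewrite /D in dD; lra.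
  by rewrite ler_pdivrMr.
have dK : K <= d%:R * c ^+ 2 / 400.
  have : 400 * K / c ^+ 2 <= d%:R by rewrite /D in dD; lra.
  rewrite ler_pdivrMr ?exprn_gt0 //; lra.
set l := ln (mu p d).
have lE : l = d%:R * c - ln 2 by rewrite /l ln_mu.
have l0 : d%:R * c / 2 <= l by rewrite lE; lra.
have em : expR l = mu p d by rewrite /l lnK // posrE mu_gt0.
split.
- by rewrite -(ltr_nat R).
- by rewrite -em; have := expR_ge1Dx l; lra.
set E := expR (l / 5).
have E1 : (l / 10) ^+ 2 <= E.
  have -> : E = expR (l / 10) ^+ 2 by rewrite /E -expRM_natl; congr (expR _); lra.
  apply: lerXn2r; rewrite ?nnegrE ?expR_ge0 //; first lra.
  by have := expR_ge1Dx (l / 10); lra.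
have E2 : (d%:R * c / 20) ^+ 2 <= (l / 10) ^+ 2.
  apply: lerXn2r; rewrite ?nnegrE //; try lra.
have E3 : d%:R * K <= (d%:R * c / 20) ^+ 2.
  have -> : (d%:R * c / 20) ^+ 2 = d%:R * (d%:R * c ^+ 2 / 400) by field.
  by rewrite ler_wpM2l //; lra.
have E4 : 24 * d%:R + 16 - 8 * ln eps <= d%:R * K.
  have H1 : - ln eps <= `|ln eps| by rewrite -normrN ler_norm.
  have H2 : `|ln eps| <= d%:R * `|ln eps|.
    by rewrite -[X in X <= _]mul1r ler_wpM2r //; lra.
  have -> : d%:R * K = 40 * d%:R + 8 * (d%:R * `|ln eps|) by rewrite /K; ring.
  lra.
have e2 : (2 : R) <= expR 1 by have := expR_ge1Dx (1 : R); lra.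
apply: (le_trans (_ : _ <= expR 1 * expR (- (E / 8) + 2 * d%:R))).
  by rewrite ler_wpM2r // expR_ge0.
rewrite -[X in _ <= X * _](lnK (x := eps)) ?posrE // -!expRD ler_expR.
lra.
Qed.

End Final.

Section Main.
Variable R : realType.
Variable p : R.
Hypothesis hp0 : 2 / 3 <= p.
Hypothesis hp1 : p < 1.
Variable b : bool.

Lemma n2 d : (0 < d)%N -> (#|side d b|%:R : R) * 2 = 2 ^+ d.
Proof. by move=> d0; rewrite -natrM card_side // natrX. Qed.

Lemma nq_mu d : (0 < d)%N -> (#|side d b|%:R : R) * (1 - p / 2) ^+ d = mu p d.
Proof.
move=> d0; rewrite /mu.
have -> : (2 - p) = 2 * (1 - p / 2) by field.
by rewrite exprMn -(n2 d0); field.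
Qed.

Lemma nq2 d : (0 < d)%N -> (#|side d b|%:R : R) * (1 - 3 * p / 4) ^+ d <= 2^-1.
Proof.
move: hp0 hp1 => h0 h1 d0.
have -> : (#|side d b|%:R : R) * (1 - 3 * p / 4) ^+ d = (2 - 3 * p / 2) ^+ d / 2.
  have -> : (2 - 3 * p / 2) = 2 * (1 - 3 * p / 4) by field.
  by rewrite exprMn -(n2 d0); field.
rewrite ler_pdivrMr; last by lra.
rewrite mulVf; last by apply/eqP; lra.
by rewrite exprn_ile1 //; lra.
Qed.

Lemma main_gen (X : forall d, {set edge d} -> R) :
  (forall d (w : {set edge d}), `|X d w| <=
     Bd (mu p d) (powR (mu p d) (3 / 5)) (powR (mu p d) (3 / 5) / (4 * mu p d)) (Phi (R := R) b w)
     / (sigma p d * expR (mu p d))) ->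
  cvg_prob0 p X.
Proof.
move=> HX eps eps0.
have p0 : 0 <= p by move: hp0 => h0; lra.
have p1 : p <= 1 by move: hp1 => h1; lra.
have [N HN] := key_bound hp0 hp1 eps0.
apply: (@squeeze_cvgr _ _ _ _ (fun _ => 0) (fun d => harmonic d)); last first.
- exact: cvg_harmonic.
- exact: cvg_cst.
near=> d.
have dN : (N <= d)%N by near: d; exact: nbhs_infty_ge.
have [d1 mu1 Hk] := HN d dN.
apply/andP; split.
  by rewrite /Prob sumr_ge0 // => w _; exact: eweight_ge0.
set m := mu p d.
have d0 : (0 < d)%N by apply: ltn_trans d1.
have dR : (2 : R) <= d%:R by rewrite (ler_nat R 2 d).
have Hw : forall w : {set edge d}, `|Phi (R := R) b w - m| <= d%:R -> `|X d w| <= eps.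
  move=> w Hw; apply: le_trans (HX d w) _.
  have sg := sigma_gt0 hp0 hp1 d.
  have em := expR_gt0 m.
  rewrite ler_pdivrMr ?mulr_gt0 //.
  have F0 := Phi_ge0 R b w.
  have Fm : Phi (R := R) b w <= m + d%:R.
    by have := ler_norm (Phi (R := R) b w - m); lra.
  apply: (le_trans (Bd_bound mu1 (ler0n _ _) F0 Fm)).
  set E := expR (ln m / 5).
  have -> : m - E / 8 + 2 * d%:R = m + (- (E / 8) + 2 * d%:R) by ring.
  rewrite expRD mulrCA mulrC mulrA ler_wpM2r ?(ltW em) //.
  apply: (le_trans Hk); rewrite ler_wpM2l ?(ltW eps0) //.
  exact: sigma_ge.
apply: (le_trans (Prob_le (f := fun w => (Phi (R := R) b w - m) ^+ 2 * (d%:R ^+ 2)^-1) p0 p1 _ _)).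
- by move=> w; rewrite divr_ge0 ?sqr_ge0 // exprn_ge0.
- move=> w Aw.
  have dp : (0 : R) < d%:R ^+ 2 by rewrite exprn_gt0 //; lra.
  rewrite ler_pdivlMr // mul1r.
  case: (lerP `|Phi (R := R) b w - m| d%:R) => H.
    by have := Hw w H; lra.
  have -> : (Phi (R := R) b w - m) ^+ 2 = `|Phi (R := R) b w - m| ^+ 2.
    by rewrite -normrX ger0_norm // sqr_ge0.
  by apply: lerXn2r; rewrite ?nnegrE ?normr_ge0 //; lra.
rewrite (Ex_ext p (g := fun w => (d%:R ^+ 2)^-1 * (Phi (R := R) b w - m) ^+ 2)); last first.
  by move=> w; rewrite mulrC.
rewrite Ex_scale /m -(nq_mu d0).
apply: (le_trans (ler_wpM2l _ (Ex_var d p0 p1 b))).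
  by rewrite invr_ge0 exprn_ge0.
apply: (le_trans (ler_wpM2l _ (nq2 d0))).
  by rewrite invr_ge0 exprn_ge0.
rewrite /harmonic /= -invfM lef_pV2 ?posrE ?mulr_gt0 ?exprn_gt0 //; try lra.
by rewrite -natr1; nra.
Unshelve. all: end_near.
Qed.

End Main.

Unset Implicit Arguments.

Theorem lemma5p2 (R : realType) (p : R) :
  2 / 3 <= p -> p < 1 ->
  forall b : bool,
    cvg_prob0 p (fun d w => tailPhi p b w / (sigma p d * expR (mu p d))) /\
    cvg_prob0 p (fun d w => tailGood p b w / (sigma p d * expR (mu p d))).
Proof.
move=> hp0 hp1 b.
have hd d : 0 < sigma p d * expR (mu p d).
  by rewrite mulr_gt0 ?expR_gt0 // sigma_gt0.
have ht d : 0 <= powR (mu p d) (3 / 5) / (4 * mu p d).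
  by rewrite divr_ge0 ?powR_ge0 // mulr_ge0 // ltW // mu_gt0.
split; apply: (@main_gen R p hp0 hp1 b) => d w.
- have /andP [T0 T1] := tailPhi_bounds p b w (ht d).
  rewrite ger0_norm ?divr_ge0 ?(ltW (hd d)) //.
  by rewrite ler_wpM2r ?invr_ge0 ?(ltW (hd d)).
- have T1 := tailGood_le p b w (ht d).
  have T0 : 0 <= tailGood p b w.
    rewrite /tailGood sumr_ge0 // => m _; rewrite sumr_ge0 // => S _.
  rewrite ger0_norm ?divr_ge0 ?(ltW (hd d)) //.
  by rewrite ler_wpM2r ?invr_ge0 ?(ltW (hd d)).
Qed.
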